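(* Let $T$ be a tree with positive edge weights rooted at the homebase $r$, and let $q\ge 0$. If a cost-optimal strategy exploring $T$ uses only one agent, then that agent terminates in a leaf of $T$ at maximum distance from $r$.
   Context: Exploration model: given a connected graph with positive edge weights, a homebase vertex, and invoking cost $q\ge 0$, a strategy is a sequence of moves, each either invoking a new agent (appearing at the homebase) or an agent traversing an edge incident to its current vertex. A vertex is explored when first visited; the strategy explores the graph when every vertex has been visited by some agent (agents need not return). With $k$ agents, agent $i$ traversing total distance $d_i$ (weights counted with multiplicity), the cost is $kq+\sum_i d_i$; a strategy is cost-optimal if it explores the graph with minimum cost (off-line setting). Distances are weighted shortest-path distances; a leaf is a non-root vertex with no children. *)

(* Defs.v *)
From mathcomp Require Import all_boot all_order all_algebra.
Set Implicit Arguments. Unset Strict Implicit. Unset Printing Implicit Defensive.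
Import Order.TTheory GRing.Theory Num.Theory.
Local Open Scope ring_scope.

Section Exploration.
Variables (R : realFieldType) (V : finType).
(* undirected graph: symmetric irreflexive edge relation [e],
   edge weights [w x y] (meaningful when [e x y]) *)
Variables (e : rel V) (w : V -> V -> R).

Definition connected_graph : Prop := forall x y : V, connect e x y.

Definition has_cycle : Prop :=
  exists (x : V) (p : seq V),
    [/\ (2 <= size p)%N, uniq (x :: p), path e x p & e (last x p) x].

Definition is_tree : Prop :=
  [/\ symmetric e, irreflexive e, connected_graph & ~ has_cycle].

Fixpoint walk_weight (x : V) (p : seq V) : R :=
  if p is y :: p' then w x y + walk_weight y p' else 0.

Definition is_dist (u v : V) (d : R) : Prop :=
  (exists p, [/\ path e u p, last u p = v & walk_weight u p = d]) /\
  (forall p, path e u p -> last u p = v -> d <= walk_weight u p).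

Definition child (r x y : V) : Prop :=
  exists p : seq V,
    [/\ path e r (rcons p y), uniq (r :: rcons p y) & last r p = x].

Definition leaf (r x : V) : Prop := x != r /\ forall y, ~ child r x y.

Variables (r : V) (q : R).

(* a move: invoke a new agent (appearing at r), or agent number i
   (0-based, in order of invocation) traverses the edge to v *)
Inductive move := Invoke | Traverse of nat & V.

(* [run pos s]: executing moves [s] from agent positions [pos];
   returns (final positions, cost incurred, vertices visited), or None
   if some move is illegal. *)
Fixpoint run (pos : seq V) (s : seq move) : option (seq V * R * seq V) :=
  match s with
  | [::] => Some (pos, 0, [::])
  | Invoke :: s' =>
      if run (rcons pos r) s' is Some (p, c, vis)
      then Some (p, q + c, r :: vis) else None
  | Traverse i v :: s' =>
      if (i < size pos)%N && e (nth r pos i) v then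
        if run (set_nth r pos i v) s' is Some (p, c, vis)
        then Some (p, w (nth r pos i) v + c, v :: vis) else None
      else None
  end.

(* strategy s (started with no agents) is legal, explores every vertex,
   has cost c (= k q + sum of distances) and ends with agents at positions p *)
Definition explores_with (s : seq move) (p : seq V) (c : R) : Prop :=
  exists vis, run [::] s = Some (p, c, vis) /\ forall v : V, v \in vis.

Definition cost_optimal (s : seq move) : Prop :=
  exists p c, explores_with s p c /\
    forall s' p' c', explores_with s' p' c' -> c <= c'.

End Exploration.

(* Main.v *)
Require Import Defs.
From mathcomp Require Import all_boot all_order all_algebra.
From mathcomp Require Import lra zify.
Set Implicit Arguments. Unset Strict Implicit. Unset Printing Implicit Defensive.
Import Order.TTheory GRing.Theory Num.Theory.
Local Open Scope ring_scope.

Section Tree.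
Variables (R : realFieldType) (V : finType) (e : rel V) (w : V -> V -> R) (r : V).
Hypothesis esy : symmetric e.
Hypothesis eirr : irreflexive e.
Hypothesis econn : forall x y, connect e x y.
Hypothesis nocyc : ~ has_cycle e.
Hypothesis wpos : forall x y, e x y -> 0 < w x y.
Hypothesis wsym : forall x y, e x y -> w x y = w y x.

Definition ed (a b : V) : rel V :=
  [rel x y | e x y && ~~ (((x == a) && (y == b)) || ((x == b) && (y == a)))].

Lemma ed_sym a b : symmetric (ed a b).
Proof.
move=> x y; rewrite /ed /= esy; congr (_ && ~~ _).
by case: (x == a); case: (y == b); case: (x == b); case: (y == a).
Qed.

Lemma acyc a b : e a b -> ~~ connect (ed a b) a b.
Proof.
move=> eab; apply/negP => /connectP [p pp lp].
move: lp; case/shortenP: pp => p' pp' up' _ lp'.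
apply: nocyc; exists a, p'; split => //.
- case: p' pp' up' lp' => [|z [|z' p'']] //=.
    by move=> _ _ ba; rewrite ba eirr in eab.
  by move=> /andP[h _] _ bz; move: h; rewrite -bz /ed /= !eqxx /= ?andbF.
- by apply: sub_path pp' => x y /andP[].
- by rewrite -lp' esy.
Qed.

Definition par u := odflt r [pick z | e z u && connect (ed z u) r z].

Lemma par_spec u : u != r -> e (par u) u && connect (ed (par u) u) r (par u).
Proof.
rewrite /par; case: pickP => [z //|none] ur /=; exfalso.
have /connectP[p pp lp] := econn r u.
move: lp; case/shortenP: pp => p' pp' up' _.
case/lastP: p' pp' up' => [|p0 z]; first by move=> _ _ /= ur'; rewrite ur' eqxx in ur.
rewrite last_rcons rcons_path => /andP[pp0 ez] up' uz; subst z.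
have := none (last r p0); rewrite ez /=; move/negP; apply.
apply/connectP; exists p0 => //.
move: up'; rewrite -rcons_cons rcons_uniq => /andP[Hn _].
apply: (@sub_in_path _ (predC1 u)) pp0.
  move=> x y /= xu yu exy; rewrite /ed /= exy /=.
  by rewrite (negbTE yu) (negbTE xu) !andbF.
apply/allP => y yin /=; apply/eqP => yu; by rewrite -yu yin in Hn.
Qed.

Definition inB u v := connect (ed (par u) u) u v.

Lemma inB_self u : inB u u.
Proof. exact: connect0. Qed.

Lemma inB_r u : u != r -> ~~ inB u r.
Proof.
move=> ur; apply/negP => H; have /andP[epu cr] := par_spec ur.
have := acyc epu; rewrite (sym_connect_sym (@ed_sym _ _)).
by rewrite (connect_trans H cr).
Qed.

Lemma inB_par u : u != r -> ~~ inB u (par u).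
Proof.
move=> ur; apply/negP => H; have /andP[epu cr] := par_spec ur.
by have := acyc epu; rewrite (sym_connect_sym (@ed_sym _ _)); rewrite /inB in H; rewrite H.
Qed.

Lemma cross u a b : e a b -> inB u a -> ~~ inB u b -> a = u /\ b = par u.
Proof.
move=> eab Ha Hb; case Hed: (ed (par u) u a b).
  by rewrite /inB (connect_trans Ha (connect1 Hed)) in Hb.
move: Hed; rewrite /ed /= eab /= => /negbFE.
case/orP => /andP[/eqP -> /eqP bu] //.
by rewrite bu inB_self in Hb.
Qed.

Lemma cross2 u a b : e a b -> inB u a != inB u b ->
  (a = u /\ b = par u) \/ (a = par u /\ b = u).
Proof.
move=> eab; case Ha: (inB u a); case Hb: (inB u b) => //= _.
  by left; apply: cross => //; rewrite Hb.
right; have eba : e b a by rewrite esy.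
by have [-> ->] := cross eba Hb (negbT Ha).
Qed.

Lemma par_par u v : u != r -> v != r -> par u = v -> par v = u -> False.
Proof.
move=> ur vr pu pv.
have /andP[e1 c1] := par_spec ur; have /andP[_ c2] := par_spec vr.
rewrite pu in e1 c1; rewrite pv in c2.
have := acyc e1; move/negP; apply.
have c2' : connect (ed v u) r u.
  rewrite (@eq_connect _ (ed v u) (ed u v)) // => x y; rewrite /ed /=.
  by case: (x == u); case: (y == v); case: (x == v); case: (y == u).
rewrite (sym_connect_sym (@ed_sym _ _)) in c1.
exact: connect_trans c1 c2'.
Qed.


Definition A v : {set V} := [set u | (u != r) && inB u v].

Lemma A_r : A r = set0.
Proof.
apply/setP => u; rewrite !inE; case: (eqVneq u r) => //= ur.
exact: negbTE (inB_r ur).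
Qed.

Lemma A_par v : v != r -> A v = v |: A (par v).
Proof.
move=> vr; apply/setP => u; rewrite !inE.
case: (eqVneq u v) => [->|uv]; first by rewrite vr inB_self.
case: (eqVneq u r) => [->|ur] //=.
have H : ed (par u) u (par v) v.
  have /andP[epv _] := par_spec vr.
  rewrite /ed /= epv /= [v == u]eq_sym (negbTE uv) andbF /=.
  apply/negP => /andP[/eqP pvu /eqP vpu].
  exact: (par_par ur vr (esym vpu) pvu).
apply/idP/idP => Hc.
  by apply: connect_trans Hc (connect1 _); rewrite ed_sym.
exact: connect_trans Hc (connect1 H).
Qed.

Lemma A_notin v : v != r -> v \notin A (par v).
Proof. by move=> vr; rewrite inE (negbTE (inB_par vr)) andbF. Qed.

Lemma card_A_par v : v != r -> #|A v| = (#|A (par v)|).+1.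
Proof. by move=> vr; rewrite A_par // cardsU1 A_notin. Qed.

Lemma A_sub_n n v : (#|A v| <= n)%N -> forall u, u \in A v -> A u \subset A v.
Proof.
elim: n v => [|n IH] v hv u uin.
  by move: hv; rewrite leqn0 => /eqP/cards0_eq Hv; rewrite Hv inE in uin.
case: (eqVneq v r) => [vr|vr]; first by rewrite vr A_r inE in uin.
move: uin; rewrite A_par // in_setU1 => /orP[/eqP->|uin]; first by rewrite -A_par.
apply: subset_trans (IH (par v) _ u uin) _.
  by move: hv; rewrite card_A_par.
exact: subsetUr.
Qed.

Lemma A_sub v u : u \in A v -> A u \subset A v.
Proof. exact: (A_sub_n (leqnn _)). Qed.

Lemma A_lt x y : y != r -> x != y -> x \in A y -> (#|A x| < #|A y|)%N.
Proof.
move=> yr xy h0; have h : x \in A (par y) by move: h0; rewrite A_par // in_setU1 (negbTE xy).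
rewrite (card_A_par yr) ltnS; apply: subset_leq_card; exact: A_sub.

Qed.

Definition wt u := w (par u) u.
Definition dep v := \sum_(u in A v) wt u.

Lemma dep_r : dep r = 0.
Proof. by rewrite /dep A_r big_set0. Qed.

Lemma dep_par v : v != r -> dep v = wt v + dep (par v).
Proof. by move=> vr; rewrite /dep A_par // big_setU1 // A_notin. Qed.

Lemma wt_pos u : u != r -> 0 < wt u.
Proof. by move=> ur; have /andP[h _] := par_spec ur; exact: wpos. Qed.

Lemma dep_ge0 v : 0 <= dep v.
Proof.
apply: sumr_ge0 => u; rewrite inE => /andP[ur _]; exact: ltW (wt_pos ur).
Qed.

Lemma ww_cat x p1 p2 : walk_weight w x (p1 ++ p2) =
  walk_weight w x p1 + walk_weight w (last x p1) p2.
Proof.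
elim: p1 x => [|y p IH] x /=; first by rewrite add0r.
by rewrite IH addrA.
Qed.

Lemma ww_rcons x p y : walk_weight w x (rcons p y) = walk_weight w x p + w (last x p) y.
Proof. by rewrite -cats1 ww_cat /= addr0. Qed.

Lemma anc_walk_n n v : (#|A v| <= n)%N ->
  exists p, [/\ path e r p, last r p = v & walk_weight w r p = dep v].
Proof.
elim: n v => [|n IH] v hv; case: (eqVneq v r) => [->|vr];
  try by exists [::]; rewrite dep_r.
  by move: hv; rewrite card_A_par.
have hv' : (#|A (par v)| <= n)%N by move: hv; rewrite card_A_par.
have [p [pp lp wp]] := IH (par v) hv'.
exists (rcons p v); split.
- by rewrite rcons_path pp lp; have /andP[] := par_spec vr.
- by rewrite last_rcons.
- by rewrite ww_rcons wp lp (dep_par vr) addrC.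
Qed.

Lemma anc_walk v :
  exists p, [/\ path e r p, last r p = v & walk_weight w r p = dep v].
Proof. exact: (anc_walk_n (leqnn _)). Qed.


Fixpoint chg (P : pred V) x p : nat :=
  if p is y :: p' then ((P x != P y) + chg P y p')%N else 0%N.

Lemma chg_last P x p : ((P x != P (last x p)) <= chg P x p)%N.
Proof.
elim: p x => [|y p IH] x /=; first by rewrite eqxx.
move: (IH y); case: (P x); case: (P y); case: (P (last y p)) => //= H;
  rewrite ?add0n ?add1n //; exact: ltnW.
Qed.

Lemma chg_two P x p : ~~ P x -> has P p -> ~~ P (last x p) -> (2 <= chg P x p)%N.
Proof.
elim: p x => [|y p IH] x //= Px.
case Py: (P y) => /= hp Pl.
  by have := chg_last P y p; rewrite Py (negbTE Pl) (negbTE Px) /= add1n ltnS.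
rewrite (negbTE Px) /=; exact: IH (negbT Py) hp Pl.
Qed.

Lemma step_le a b : e a b ->
  \sum_(u | u != r) wt u * ((inB u a != inB u b) : nat)%:R <= w a b.
Proof.
move=> eab.
case: (pickP (fun u => (u != r) && (inB u a != inB u b))) => [u0 /andP[u0r hu0]|none].
  rewrite (bigD1 u0) //= big1 ?addr0.
    rewrite hu0 mulr1 /wt.
    case: (cross2 eab hu0) => [[-> ->]|[-> ->]] //.
    by rewrite wsym // -[par u0]/(par u0); have /andP[] := par_spec u0r.
  move=> u /andP[ur uu0]; case: eqP => [_|/eqP hu]; first by rewrite mulr0.
  exfalso; case: (cross2 eab hu0) => [[a0 b0]|[a0 b0]];
    case: (cross2 eab hu) => [[a1 b1]|[a1 b1]].
  - by rewrite -a0 a1 eqxx in uu0.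
  - apply: (par_par u0r ur); [by rewrite -b0 b1 | by rewrite -a1 a0].
  - apply: (par_par ur u0r); [by rewrite -b1 b0 | by rewrite -a0 a1].
  - by rewrite -b0 b1 eqxx in uu0.
rewrite big1; first by apply: ltW; exact: wpos.
move=> u ur; have := none u; rewrite ur /= => /negbFE/eqP ->.
by rewrite eqxx mulr0.
Qed.

Lemma ww_ge x p : path e x p ->
  \sum_(u | u != r) wt u * (chg (inB u) x p)%:R <= walk_weight w x p.
Proof.
elim: p x => [|y p IH] x /=.
  by move=> _; rewrite big1 // => u _; rewrite mulr0.
move=> /andP[exy pp].
rewrite (eq_bigr (fun u => wt u * ((inB u x != inB u y) : nat)%:R +
   wt u * (chg (inB u) y p)%:R)); last by move=> u _; rewrite natrD mulrDr.
by rewrite big_split /=; apply: lerD; [exact: step_le | exact: IH].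
Qed.

Definition Wt := \sum_(u | u != r) wt u.
Definition T x := \sum_(u | u != r) wt u * ((1 + ~~ inB u x)%N)%:R.

Lemma dep_ind x : dep x = \sum_(u | u != r) wt u * (inB u x : nat)%:R.
Proof.
rewrite /dep (eq_bigl (fun u => (u != r) && inB u x)); last by move=> u; rewrite inE.
rewrite big_mkcondr /=; apply: eq_bigr => u _.
by case: (inB u x); rewrite ?mulr1 ?mulr0.
Qed.

Lemma T_dep x : T x + dep x = Wt *+ 2.
Proof.
rewrite /T dep_ind -big_split /= /Wt -sumrMnl; apply: eq_bigr => u _.
case: (inB u x) => /=.
  by rewrite mulr1 mulr2n.
by rewrite mulr0 addr0 mulr_natr.
Qed.

Lemma cover_lb p x : path e r p -> last r p = x -> (forall v, v \in r :: p) ->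
  T x <= walk_weight w r p.
Proof.
move=> pp lp cov; apply: le_trans (ww_ge pp).
apply: ler_sum => u ur; apply: ler_wpM2l; first exact: ltW (wt_pos ur).
rewrite ler_nat; case Hx: (inB u x) => /=.
  by have := chg_last (inB u) r p; rewrite lp Hx (negbTE (inB_r ur)).
apply: chg_two; first exact: inB_r.
  apply/hasP; exists u; last exact: inB_self.
  by have := cov u; rewrite inE (negbTE ur).
by rewrite lp Hx.
Qed.

Lemma dist_lb p x : path e r p -> last r p = x -> dep x <= walk_weight w r p.
Proof.
move=> pp lp; apply: le_trans (ww_ge pp).
rewrite dep_ind; apply: ler_sum => u ur; apply: ler_wpM2l; first exact: ltW (wt_pos ur).
rewrite ler_nat; have := chg_last (inB u) r p; rewrite lp (negbTE (inB_r ur)).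
by case: (inB u x).
Qed.

Lemma enter u x p : u != r -> path e x p -> ~~ inB u x -> inB u (last x p) ->
  par u \in x :: p.
Proof.
move=> ur; elim: p x => [|y p IH] x /=; first by move=> _ /negbTE ->.
move=> /andP[exy pp] hx hl; case hy: (inB u y).
  have eyx : e y x by rewrite esy.
  by have [_ <-] := cross eyx hy hx; rewrite inE eqxx.
by rewrite inE (IH y pp (negbT hy) hl) orbT.
Qed.

Lemma edge_par x y : e x y -> (y != r /\ par y = x) \/ (x != r /\ par x = y).
Proof.
move=> exy; have xy : x != y by apply/eqP => xy; rewrite xy eirr in exy.
case: (eqVneq y r) => [yr|yr]; case: (eqVneq x r) => [xr|xr].
- by rewrite xr yr eirr in exy.
- right; split => //; apply/eqP/negP => hp.
  have := inB_r xr; rewrite /inB; move/negP; apply; apply: connect1.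
  rewrite -yr /ed /= exy /= [y == x]eq_sym (negbTE xy) eqxx andbF /=.
  by apply/eqP => h; apply: hp; rewrite -h.
- left; split => //; apply/eqP/negP => hp.
  have := inB_r yr; rewrite /inB; move/negP; apply; apply: connect1.
  rewrite -xr /ed /= esy exy /= (negbTE xy) eqxx andbF /=.
  by apply/eqP => h; apply: hp; rewrite -h.
case: (eqVneq (par y) x) => [->|pyx]; first by left.
case: (eqVneq (par x) y) => [->|pxy]; first by right.
exfalso.
have h1 : x \in A y.
  rewrite inE xr /inB /=; apply: connect1.
  rewrite /ed /= exy /= [y == x]eq_sym (negbTE xy) andbF eqxx /= eq_sym.
  exact: pxy.
have h2 : y \in A x.
  rewrite inE yr /inB /=; apply: connect1.
  rewrite /ed /= (esy y x) exy /= (negbTE xy) andbF eqxx /= eq_sym.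
  exact: pyx.
have yx : y != x by rewrite eq_sym.
have := A_lt yr xy h1; have := A_lt xr yx h2.
move=> l1 l2; have := ltn_trans l1 l2; by rewrite ltnn.
Qed.


Definition WS (S : {set V}) := \sum_(u in S | u != r) wt u.

Lemma WS_ge0 (S : {set V}) : 0 <= WS S.
Proof. by apply: sumr_ge0 => u /andP[_ ur]; exact: ltW (wt_pos ur). Qed.

Lemma WS_D1 (S : {set V}) y : y \in S -> y != r -> WS S = wt y + WS (S :\ y).
Proof.
move=> yS yr; rewrite /WS (bigD1 y) /=; last by rewrite yS.
congr (_ + _); apply: eq_bigl => u; rewrite in_setD1.
by case: (u == y); case: (u \in S); case: (u != r).
Qed.

Lemma build n : forall (S : {set V}) t, (#|S| <= n)%N -> r \in S ->
  (forall z, z \in S -> z != r -> par z \in S) -> t \in S ->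
  exists p, [/\ path e r p, last r p = t, {subset S <= r :: p} &
     walk_weight w r p <= WS S *+ 2 - dep t].
Proof.
elim: n => [|n IH] S t hS rS cS tS.
  by move: hS; rewrite leqn0 => /eqP/cards0_eq HS; rewrite HS inE in rS.
case: (pickP (fun y => (y \in S) && (y != r) && ~~ inB y t)) => [y0 Hy0|none].
  case: (@arg_maxnP _ y0 (fun y => (y \in S) && (y != r) && ~~ inB y t) (fun y => #|A y|) Hy0).
  move=> y /andP[/andP[yS yr] yt] ymax.
  have nochild : forall z, z \in S -> z != r -> par z != y.
    move=> z zS zr; apply/eqP => pz.
    have zt : ~~ inB z t.
      apply/negP => hz.
      have zA : z \in A t by rewrite inE zr hz.
      have yA : y \in A z by rewrite (A_par zr) pz !inE yr inB_self orbT.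
      have := subsetP (A_sub zA) y yA; rewrite inE (negbTE yt) andbF //.
    have := ymax z; rewrite zS zr zt => /(_ isT).
    by rewrite (card_A_par zr) pz => h; lia.
  have yty : t != y by apply/eqP => ty; rewrite ty inB_self in yt.
  have yry : r != y by rewrite eq_sym.
  have hS' : (#|S :\ y| <= n)%N by move: hS; rewrite (cardsD1 y S) yS.
  have rS' : r \in S :\ y by rewrite in_setD1 yry.
  have cS' : forall z, z \in S :\ y -> z != r -> par z \in S :\ y.
    move=> z; rewrite !in_setD1 => /andP[_ zS] zr.
    by rewrite nochild // cS.
  have tS' : t \in S :\ y by rewrite in_setD1 yty.
  have [p [pp lp cov wle]] := IH _ _ hS' rS' cS' tS'.
  have pyS : par y \in S :\ y.
    rewrite in_setD1 cS // andbT; apply/eqP => pyy.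
    by have /andP[h _] := par_spec yr; rewrite pyy eirr in h.
  have /andP[epy _] := par_spec yr.
  have hin := cov _ pyS; move: pp lp cov wle; case/splitPl: hin => p1 p2 lp1 pp lp cov wle.
  exists (p1 ++ y :: par y :: p2); split.
  - move: pp; rewrite !cat_path lp1 /= epy esy epy => /andP[-> ->] //.
  - by move: lp; rewrite !last_cat lp1.
  - move=> v vS; case: (eqVneq v y) => [->|vy].
      by rewrite !(inE, mem_cat, eqxx, orbT).
    have := cov v; rewrite in_setD1 vy vS => /(_ isT).
    rewrite !inE !mem_cat !inE => /orP[->//|/orP[->|->]]; rewrite ?orbT //.
  - move: wle; rewrite !ww_cat lp1 /= (WS_D1 yS yr) -(wsym epy) => wle.
    rewrite /wt in wle *; lra.
case: (eqVneq t r) => [tr|tr].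
  exists [::]; split => //.
  - move=> v vS; rewrite inE; apply/negPn/negP => vr.
    by have := none v; rewrite vS vr tr (negbTE (inB_r vr)).
  - rewrite tr dep_r subr0 /=; have := WS_ge0 S; lra.
have tt : par t != t.
  by apply/eqP => h; have /andP[h' _] := par_spec tr; rewrite h eirr in h'.
have hS' : (#|S :\ t| <= n)%N by move: hS; rewrite (cardsD1 t S) tS.
have rS' : r \in S :\ t by rewrite in_setD1 eq_sym tr.
have cS' : forall z, z \in S :\ t -> z != r -> par z \in S :\ t.
  move=> z; rewrite !in_setD1 => /andP[zt zS] zr; rewrite cS // andbT.
  apply/eqP => pz.
  have hz : inB z t by have := none z; rewrite zS zr /= => /negbFE.
  have zA : z \in A t by rewrite inE zr hz.
  have := subset_leq_card (A_sub zA); rewrite (card_A_par zr) pz ltnn //.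
have ptS' : par t \in S :\ t by rewrite in_setD1 tt cS.
have [p [pp lp cov wle]] := IH _ _ hS' rS' cS' ptS'.
exists (rcons p t); split.
- by rewrite rcons_path pp lp; have /andP[] := par_spec tr.
- by rewrite last_rcons.
- move=> v vS; case: (eqVneq v t) => [->|vt].
    by rewrite -rcons_cons mem_rcons inE eqxx.
  have := cov v; rewrite in_setD1 vt vS => /(_ isT).
  by rewrite -rcons_cons mem_rcons inE => ->; rewrite orbT.
- move: wle; rewrite ww_rcons lp (WS_D1 tS tr) (dep_par tr) => wle.
  rewrite /wt in wle *; lra.
Qed.


Variable q : R.

Lemma run_size pos s P C Vis : run e w r q pos s = Some (P, C, Vis) -> (size pos <= size P)%N.
Proof.
elim: s pos C Vis => [|[|i v] s IH] pos C Vis /=.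
- by case=> -> _ _.
- case H: (run e w r q (rcons pos r) s) => [[[P' C'] Vis']|] // [eP _ _]; subst P'.
  by have := IH _ _ _ H; rewrite size_rcons; exact: ltnW.
- case: ifP => // /andP[hi _].
  case H: (run e w r q (set_nth r pos i v) s) => [[[P' C'] Vis']|] // [eP _ _]; subst P'.
  have := IH _ _ _ H; rewrite size_set_nth; apply: leq_trans; exact: leq_maxr.
Qed.

Lemma run_one s a x C Vis : run e w r q [:: a] s = Some ([:: x], C, Vis) ->
  exists p, [/\ path e a p, last a p = x, C = walk_weight w a p & Vis = p].
Proof.
elim: s a C Vis => [|[|i v] s IH] a C Vis /=.
- by case=> -> <- <-; exists [::].
- case H: (run e w r q [:: a; r] s) => [[[P' C'] Vis']|] // [eP _ _].
  by have := run_size H; rewrite eP.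
- case: ifP => // /andP[hi hev].
  have i0 : i = 0%N by case: i hi {hev}.
  subst i; move: hev => /= hev.
  case H: (run e w r q [:: v] s) => [[[P' C'] Vis']|] // [eP eC eV]; subst P'.
  have [p [pp lp wp vp]] := IH _ _ _ H.
  by exists (v :: p); rewrite /= hev pp lp -eC wp -eV vp.
Qed.

Lemma run_walk a p : path e a p ->
  run e w r q [:: a] (map (Traverse 0) p) = Some ([:: last a p], walk_weight w a p, p).
Proof.
elim: p a => [|y p IH] a //= /andP[eay pp].
by rewrite eay (IH y pp).
Qed.

Lemma run_nil s x c vis : run e w r q [::] s = Some ([:: x], c, vis) ->
  exists p, [/\ path e r p, last r p = x, c = q + walk_weight w r p & vis = r :: p].
Proof.
case: s => [|[|i v] s] //=.
case H: (run e w r q [:: r] s) => [[[P' C'] Vis']|] // [eP <- <-]; subst P'.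
have [p [pp lp wp vp]] := run_one H.
by exists p; rewrite wp vp.
Qed.


Lemma main_sec (cardV : (1 < #|V|)%N) s x c :
  cost_optimal e w r q s -> explores_with e w r q s [:: x] c ->
  leaf e r x /\ (forall v dx dv, is_dist e w r x dx -> is_dist e w r v dv -> dv <= dx).
Proof.
move=> [p0 [c0 [[vis0 [hrun0 _]] hopt]]] [vis [hrun hcov]].
rewrite hrun in hrun0; case: hrun0 => ep0 ec0 _; subst c0.
have [p [pp lp cp vp]] := run_nil hrun.
have cov : forall v, v \in r :: p by move=> v; rewrite -vp.
have lb := cover_lb pp lp cov.
have far : forall t, dep t <= dep x.
  move=> t.
  have [p' [pp' lp' cov' wle]] := build (leqnn #|[set: V]|) (in_setT r)
     (fun z _ _ => in_setT (par z)) (in_setT t).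
  have ex : explores_with e w r q (Invoke V :: map (@Traverse V 0) p') [:: last r p']
      (q + walk_weight w r p').
    exists (r :: p'); split; first by rewrite /= run_walk.
    by move=> v; apply: cov'; rewrite in_setT.
  have := hopt _ _ _ ex.
  have WT : WS [set: V] = Wt by rewrite /WS /Wt; apply: eq_bigl => u; rewrite in_setT.
  rewrite WT in wle; have := T_dep x; rewrite cp; lra.
have [t tr] : exists t, t != r.
  case: (pickP (predC1 r)) => [t tr|none]; first by exists t.
  exfalso; have : #|V| = 1%N.
    rewrite -(card1 r); apply: eq_card => z; rewrite !inE.
    by have := none z; rewrite /= => /negbFE ->.
  by move=> h; rewrite h in cardV.
have xr : x != r.
  apply/eqP => xr; have := far t; rewrite xr dep_r (dep_par tr).
  have := wt_pos tr; have := dep_ge0 (par t); lra.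
split.
  split => // y [p1 [pp1 up1 lp1]].
  move: pp1; rewrite rcons_path lp1 => /andP[pp1' exy].
  case: (edge_par exy) => [[yr pyx]|[_ pxy]].
    have := far y; rewrite (dep_par yr) pyx; have := wt_pos yr; lra.
  have hl : inB x (last r p1) by rewrite lp1; exact: inB_self.
  have := enter xr pp1' (inB_r xr) hl; rewrite pxy => yin.
  by move: up1; rewrite -rcons_cons rcons_uniq yin.
move=> v dx dv [[px [ppx lpx wpx]] _] [_ hv].
have [pv [ppv lpv wpv]] := anc_walk v.
have := hv _ ppv lpv; rewrite wpv; have := dist_lb ppx lpx; rewrite wpx.
have := far v; lra.
Qed.

End Tree.


Theorem mainTheorem8 (R : realFieldType) (V : finType) (e : rel V)
    (w : V -> V -> R) (r : V) (q : R) :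
  is_tree e ->
  (forall x y, e x y -> 0 < w x y) ->
  (forall x y, e x y -> w x y = w y x) ->
  (1 < #|V|)%N ->
  0 <= q ->
  forall (s : seq (move V)) (x : V) (c : R),
    cost_optimal e w r q s ->
    explores_with e w r q s [:: x] c ->
    leaf e r x /\
    (forall (v : V) (dx dv : R),
        is_dist e w r x dx -> is_dist e w r v dv -> dv <= dx).
Proof.
move=> [esy eirr econn nocyc] wpos wsym cardV _ s x c.
exact: (main_sec esy eirr econn nocyc wpos wsym cardV).
Qed.
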